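(* Let $G=(V,E)$ be a graph with no isolated vertices, $m\ge1$ edges, and exactly $L$ vertices of degree $1$. Let $\mathcal{L}$ be the partition produced by the Following algorithm with parameter $d_0=1$ (described in the context). Then $$Q(\mathcal{L})\ \ge\ \frac{L}{2m}-\frac{\sum_{i=1}^n d_i^2}{m^2}.$$
   Context: $G=(V,E)$ is an undirected simple graph, $V=\{1,\dots,n\}$, $m=|E|\ge1$, adjacency matrix $A$, degrees $d_i$. For a partition $\mathcal{C}$ of $V$ into nonempty communities, its modularity is $Q(\mathcal{C})=\frac{1}{2m}\sum_{i,j}\left(A_{i,j}-\frac{d_id_j}{2m}\right)\delta_{i,j}$, the sum over all ordered pairs $(i,j)$ including $i=j$, where $\delta_{i,j}=1$ if $i,j$ lie in the same community and $0$ otherwise. Following algorithm with parameter $d_0=1$: start with all vertices unlabeled; process vertices in non-decreasing order of degree; for each vertex $v$ that is still unlabeled when processed and has $d_v\le 1$, let $u$ be a neighbor of $v$ not labeled ''follower'' (if several, one of minimum degree) and set $v$ to follow $u$, labeling $v$ ''follower'' and $u$ ''followee''; after this pass, label every still-unlabeled vertex ''followee''; finally, form one community for each followee, consisting of the followee together with all vertices that follow it. *)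

(* Defs.v *)
(* Graph on vertex set 'I_n (= {1..n} shifted to {0..n-1}). *)
From HB Require Import structures.
From mathcomp Require Import all_boot all_order all_algebra.
Set Implicit Arguments. Unset Strict Implicit. Unset Printing Implicit Defensive.
Import Order.TTheory GRing.Theory Num.Theory.

Section Following.
Variable n : nat.
Variable e : rel 'I_n.

Definition simple_graph : Prop := symmetric e /\ irreflexive e.

Definition deg (v : 'I_n) : nat := #|[pred u | e v u]|.

Definition nedges : nat := #|[pred p : 'I_n * 'I_n | e p.1 p.2 && (p.1 < p.2)%N]|.

Definition nleaves : nat := #|[pred v | deg v == 1%N]|.

(* modularity of the partition induced by community map c : vertex -> community id,
   i.e. delta_{i,j} = (c i == c j); computed over the rationals. *)
Definition modularity (T : eqType) (c : 'I_n -> T) : rat := (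
  let m2 : rat := (2 * nedges)%:R in
  m2^-1 * \sum_(i : 'I_n) \sum_(j : 'I_n)
     (((e i j : nat)%:R - (deg i)%:R * (deg j)%:R / m2) * ((c i == c j) : nat)%:R))%R.

Inductive label := Unlabeled | Follower of 'I_n | Followee.

Definition is_follower (l : label) : bool :=
  if l is Follower _ then true else false.

Definition state := 'I_n -> label.

Definition set_follow (s : state) (v u : 'I_n) : state :=
  fun x => if x == v then Follower u else if x == u then Followee else s x.

(* processing one vertex v, with parameter d0; nondeterministic in the choice
   among minimum-degree eligible neighbours *)
Inductive fstep (d0 : nat) : state -> 'I_n -> state -> Prop :=
| fstep_labeled s v : s v <> Unlabeled -> fstep d0 s v s
| fstep_bigdeg s v : (d0 < deg v)%N -> fstep d0 s v s
| fstep_noneighbor s v : s v = Unlabeled -> (deg v <= d0)%N ->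
    (forall u, e v u -> is_follower (s u)) -> fstep d0 s v s
| fstep_follow s v u : s v = Unlabeled -> (deg v <= d0)%N ->
    e v u -> ~~ is_follower (s u) ->
    (forall w, e v w -> ~~ is_follower (s w) -> (deg u <= deg w)%N) ->
    fstep d0 s v (set_follow s v u).

Inductive frun (d0 : nat) : state -> seq 'I_n -> state -> Prop :=
| frun_nil s : frun d0 s [::] s
| frun_cons s v vs s1 s2 : fstep d0 s v s1 -> frun d0 s1 vs s2 -> frun d0 s (v :: vs) s2.

Definition valid_order (vs : seq 'I_n) : Prop :=
  perm_eq vs (enum 'I_n) /\ sorted (fun a b => (deg a <= deg b)%N) vs.

(* final community map: each vertex is sent to its followee; vertices still
   unlabeled after the pass become followees (hence map to themselves) *)
Definition community_of (s : state) (x : 'I_n) : 'I_n :=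
  if s x is Follower u then u else x.

Definition following_partition (d0 : nat) (c : 'I_n -> 'I_n) : Prop :=
  exists vs s, valid_order vs /\ frun d0 (fun _ => Unlabeled) vs s /\
               c = community_of s.
End Following.

(* Main.v *)
Require Import Defs.
From HB Require Import structures.
From mathcomp Require Import all_boot all_order all_algebra.
Import Order.TTheory GRing.Theory Num.Theory.
Set Implicit Arguments. Unset Strict Implicit.

Section P.
Variable n : nat.
Variable e : rel 'I_n.
Hypothesis esym : symmetric e.
Hypothesis eirr : irreflexive e.

Lemma deg1_uniq u a b : (deg e u <= 1)%N -> e u a -> e u b -> a = b.
Proof.
move=> /card_le1_eqP H ea eb; symmetry; apply: (H a b); by rewrite inE.
Qed.

Definition Inv (s : state n) : Prop :=
  (forall x u, s x = Follower u -> [/\ e x u, (deg e x <= 1)%N & s u = Followee n]) /\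
  (forall x, s x = Followee n -> exists y, s y = Follower x).

Definition Good (s : state n) x : Prop :=
  (exists y, s x = Follower y) \/ (exists y, s y = Follower x).

Lemma set_follow_old (s : state n) v u x y :
  s v = Unlabeled n -> ~~ is_follower (s u) -> s x = Follower y ->
  set_follow s v u x = Follower y.
Proof.
move=> sv su sx; rewrite /set_follow.
case: eqP => [E|_]; first by rewrite E sv in sx.
case: eqP => [E|_] //; by rewrite -E sx in su.
Qed.

Lemma set_follow_ee (s : state n) v u x :
  s v = Unlabeled n -> s x = Followee n -> set_follow s v u x = Followee n.
Proof.
move=> sv sx; rewrite /set_follow.
case: eqP => [E|_]; first by rewrite E sv in sx.
by case: eqP.
Qed.

Lemma fstep_inv s v s' : fstep e 1 s v s' -> Inv s -> Inv s' /\
   (forall x, Good s x -> Good s' x) /\ (deg e v = 1%N -> Good s' v).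
Proof.
case=> {s v s'}.
- move=> s v sv [I1 I2]; split=> //; split=> // _.
  case E: (s v) => [|u|]; first by [].
  + by left; exists u.
  + by right; apply: I2.
- move=> s v dv I; split=> //; split=> // d1; by rewrite d1 in dv.
- move=> s v sv dv Hn [I1 I2]; split=> //; split=> // d1.
  exfalso.
  have : (0 < deg e v)%N by rewrite d1.
  rewrite /deg => /card_gt0P [u]; rewrite inE => evu.
  have := Hn u evu; case E: (s u) => [|w|] // _.
  have [euw du sw] := I1 _ _ E.
  have vw : v = w by apply: (deg1_uniq du); rewrite // esym.
  by rewrite -vw sv in sw.
- move=> s v u sv dv evu su Hmin [I1 I2].
  have vu : v != u by apply/eqP=> E; rewrite E eirr in evu.
  have Hold := @set_follow_old s v u _ _ sv su.
  have Hee := @set_follow_ee s v u _ sv.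
  split; [split|split].
  + move=> x w; rewrite {1}/set_follow.
    case: eqP => [->|xv].
      case=> <-; split=> //; rewrite /set_follow eq_sym (negbTE vu); by rewrite eqxx.
    case: eqP => [//|xu] sx.
    have [exw dx sw] := I1 _ _ sx; split=> //; exact: Hee.
  + move=> x; rewrite {1}/set_follow.
    case: eqP => [//|xv]; case: eqP => [->|xu] sx.
      by exists v; rewrite /set_follow eqxx.
    have [y sy] := I2 _ sx; exists y; exact: Hold.
  + move=> x [[y sx]|[y sy]]; [left; exists y|right; exists y]; exact: Hold.
  + by move=> _; left; exists u; rewrite /set_follow eqxx.
Qed.

Lemma frun_inv s vs s' : frun e 1 s vs s' -> Inv s -> Inv s' /\
   (forall x, Good s x -> Good s' x) /\ (forall x, x \in vs -> deg e x = 1%N -> Good s' x).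
Proof.
elim=> {s vs s'}.
- move=> s I; split=> //; split=> //.
- move=> s v vs s1 s2 st _ IH I.
  have [I1 [G1 L1]] := fstep_inv st I.
  have [I2 [G2 L2]] := IH I1.
  split=> //; split; first by move=> x /G1 /G2.
  move=> x; rewrite inE => /orP [/eqP ->|xv] dx; last exact: L2.
  exact/G2/L1.
Qed.

Lemma sum_ind (P : pred 'I_n) : \sum_i (P i : nat) = #|P|.
Proof.
rewrite -sum1_card [RHS]big_mkcond; apply: eq_bigr => i _; by rewrite unfold_in; case: (P i).
Qed.

Lemma collapse (F : 'I_n -> nat) j : \sum_k F k * (j == k) = F j.
Proof.
rewrite (eq_bigr (fun k => if k == j then F k else 0)); last first.
  by move=> k _; rewrite eq_sym; case: (k == j); rewrite ?muln1 ?muln0.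
by rewrite -big_mkcond big_pred1_eq.
Qed.

Variable s : state n.
Hypothesis I : Inv s.
Let c := community_of s.
Let F := \sum_i (is_follower (s i) : nat).

Lemma cnf k : ~~ is_follower (s k) -> c k = k.
Proof. by rewrite /c /community_of; case: (s k). Qed.

Lemma pointA i j :
  (is_follower (s i) && (c i == j)) + (is_follower (s j) && (c j == i)) <= e i j * (c i == c j).
Proof.
have [I1 _] := I.
rewrite /c /community_of.
case Hi: (s i) => [|u|]; case Hj: (s j) => [|w|] //=.
- case: eqP => [E|_] //; subst w; have [eji _ _] := I1 _ _ Hj.
  by rewrite esym eji ?eqxx.
- case: eqP => [E|_] //; subst u; have [eij _ _] := I1 _ _ Hi.
  by rewrite eij ?eqxx.
- case: eqP => [E|_]; first by subst u; have [_ _ sj] := I1 _ _ Hi; rewrite sj in Hj.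
  case: eqP => [E|_] //; subst w; have [_ _ si] := I1 _ _ Hj; by rewrite si in Hi.
- case: eqP => [E|_] //; subst u; have [eij _ _] := I1 _ _ Hi.
  by rewrite eij ?eqxx.
- case: eqP => [E|_] //; subst w; have [eji _ _] := I1 _ _ Hj.
  by rewrite esym eji ?eqxx.
Qed.

Lemma boundA : 2 * F <= \sum_i \sum_j e i j * (c i == c j).
Proof.
apply: leq_trans (_ : \sum_i \sum_j ((is_follower (s i) && (c i == j)) +
   (is_follower (s j) && (c j == i))) <= _); last first.
  by apply: leq_sum => i _; apply: leq_sum => j _; apply: pointA.
have H : forall i, \sum_j ((is_follower (s i) && (c i == j)) : nat) = is_follower (s i).
  move=> i; rewrite -(collapse (fun _ => (is_follower (s i) : nat)) (c i)).
  by apply: eq_bigr => j _; case: (is_follower _); case: (_ == _).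
rewrite (eq_bigr (fun i => \sum_j ((is_follower (s i) && (c i == j)) : nat) +
   \sum_j ((is_follower (s j) && (c j == i)) : nat))); last by move=> i _; rewrite big_split.
rewrite big_split /= [X in _ <= _ + X]exchange_big /=.
rewrite !(eq_bigr _ (fun i _ => H i)).
by rewrite mul2n -addnn.
Qed.

Let S k := \sum_i deg e i * (c i == k).

Lemma pointB i k : deg e i * (c i == k) <= (i == k) * deg e k + e k i.
Proof.
have [I1 _] := I.
case: (eqVneq (c i) k) => [E|]; last by rewrite muln0.
case: (eqVneq i k) => [->|ik]; first by rewrite muln1 mul1n leq_addr.
move: E; rewrite /c /community_of; case Hi: (s i) => [|u|] E; try by rewrite E eqxx in ik.
subst u; have [eik di _] := I1 _ _ Hi; by rewrite muln1 mul0n add0n esym eik.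
Qed.

Lemma boundS k : S k <= 2 * deg e k.
Proof.
apply: leq_trans (_ : \sum_i ((i == k) * deg e k + e k i) <= _).
  by apply: leq_sum => i _; apply: pointB.
rewrite big_split /= sum_ind.
have -> : \sum_i (i == k) * deg e k = deg e k.
  rewrite -[RHS](collapse (fun _ => deg e k) k); apply: eq_bigr => i _; by rewrite mulnC eq_sym.
by rewrite mul2n -addnn.
Qed.

Lemma regroup (f : 'I_n -> nat) : \sum_i deg e i * f (c i) = \sum_k f k * S k.
Proof.
rewrite (eq_bigr (fun i => \sum_k deg e i * f k * (c i == k))); last first.
  move=> i _; rewrite -(collapse (fun k => deg e i * f k) (c i)) //.
rewrite exchange_big /=; apply: eq_bigr => k _; rewrite /S big_distrr /=.
apply: eq_bigr => i _; by rewrite mulnCA mulnA.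
Qed.

Lemma boundB : \sum_i \sum_j deg e i * deg e j * (c i == c j) <= 4 * \sum_i deg e i ^ 2.
Proof.
rewrite (eq_bigr (fun i => deg e i * S (c i))); last first.
  move=> i _; rewrite /S big_distrr /=; apply: eq_bigr => j _; by rewrite mulnA eq_sym.
rewrite (regroup S) big_distrr /=; apply: leq_sum => k _.
have := boundS k; rewrite -(leq_sqr (S k)) => H.
by apply: leq_trans H _; rewrite expnMn.
Qed.

Lemma boundL : (forall x, deg e x = 1 -> Good s x) -> nleaves e <= 2 * F.
Proof.
move=> G.
have HF : F = #|[set x | is_follower (s x)]|.
  rewrite /F sum_ind; apply: eq_card => x; by rewrite inE.
rewrite HF /nleaves.
apply: leq_trans (_ : #|[set x | is_follower (s x)] :|: c @: [set x | is_follower (s x)]| <= _).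
  apply: subset_leq_card; apply/subsetP => v; rewrite inE => /eqP /G [[y sv]|[y sy]].
    by rewrite !inE sv.
  apply/setUP; right; apply/imsetP; exists y; first by rewrite inE sy.
  by rewrite /c /community_of sy.
rewrite cardsU mul2n -addnn; apply: leq_trans (leq_subr _ _) _.
by rewrite leq_add2l leq_imset_card.
Qed.

End P.

From mathcomp Require Import ring lra.
Local Open Scope ring_scope.

Lemma split_sum n (f g d : 'I_n -> 'I_n -> nat) (m2 : rat) :
  \sum_i \sum_j (((f i j)%:R - (g i j)%:R / m2) * (d i j)%:R) =
  (\sum_i \sum_j (f i j * d i j)%N)%:R - (\sum_i \sum_j (g i j * d i j)%N)%:R / m2.
Proof.
rewrite !natr_sum mulr_suml -sumrB; apply: eq_bigr => i _.
rewrite !natr_sum mulr_suml -sumrB; apply: eq_bigr => j _.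
rewrite !natrM; ring.
Qed.

Lemma final_alg (a b L D m : rat) : 0 < m -> L <= a -> b <= 4 * D ->
  L / (2 * m) - D / (m ^+ 2) <= (2 * m)^-1 * (a - b / (2 * m)).
Proof.
move=> m0 La bD.
have E : (2 * m)^-1 * (a - b / (2 * m)) - (L / (2 * m) - D / (m ^+ 2)) =
   (a - L) / (2 * m) + (4 * D - b) / (4 * m ^+ 2).
  by field; rewrite gt_eqF.
rewrite -subr_ge0 E; apply: addr_ge0; apply: divr_ge0; rewrite ?subr_ge0 //.
- by rewrite mulr_ge0 // ltW.
- by rewrite mulr_ge0 // exprn_ge0 // ltW.
Qed.

Theorem mainTheorem6 (n : nat) (e : rel 'I_n) (c : 'I_n -> 'I_n) :
  simple_graph e ->
  (forall v : 'I_n, (0 < deg e v)%N) ->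
  (1 <= nedges e)%N ->
  following_partition e 1 c ->
  modularity e c >=
    (nleaves e)%:R / (2 * nedges e)%:R
    - (\sum_(i : 'I_n) (deg e i ^ 2)%N%:R) / ((nedges e) ^ 2)%N%:R.
Proof.
move=> [esym eirr] dpos m1 [vs [s [[Hperm _] [Hrun ->]]]].
have I0 : Inv e (fun _ : 'I_n => Unlabeled n) by split.
have [I [_ Hl]] := frun_inv esym eirr Hrun I0.
have G : forall x, deg e x = 1%N -> Good s x.
  move=> x; apply: Hl; by rewrite (perm_mem Hperm) mem_enum.
have hA := boundA esym I.
have hB := boundB esym I.
have hL := boundL G.
rewrite /modularity /=.
rewrite [X in _ <= _ * X](eq_bigr (fun i => \sum_j (((e i j : nat)%:R - ((deg e i * deg e j)%N)%:R / (2 * nedges e)%:R)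
   * ((community_of s i == community_of s j) : nat)%:R))); last first.
  by move=> i _; apply: eq_bigr => j _; rewrite (natrM _ (deg e i)).
rewrite split_sum -natr_sum natrM natrX.
apply: final_alg.
- by rewrite ltr0n.
- rewrite ler_nat; exact: leq_trans hL hA.
- by rewrite -natrM ler_nat.
Qed.
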